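(* Let $N=\{1,\ldots,n\}$, $\mathcal{X}=\{-1,1\}^n$, and let $P\subseteq\Delta(\mathcal{X})$ be the convex hull of a finite set $\{p_j\}_{j\in M}\subsetneq\Delta(\mathcal{X})$, where $M=\{1,\ldots,m\}$. Then: (1) A deterministic voting rule $\phi$ is $P$-robust if and only if there exists a nonzero $w\in\mathbb{R}_+^n$ such that $$\frac{\sum_{i\in N} w_i r_i(\phi,p_j)}{\sum_{i\in N} w_i}>\frac12\quad\text{for all } j\in M.$$ In particular, a deterministic voting rule is robust (i.e. $\Delta(\mathcal{X})$-robust) if and only if it is a weighted majority rule with nonnegative weights such that there are no ties. (2) A deterministic voting rule $\phi$ is weakly $P$-robust if and only if there exists a nonzero $w\in\mathbb{R}_+^n$ such that $$\frac{\sum_{i\in N} w_i r_i(\phi,p_j)}{\sum_{i\in N} w_i}\geq\frac12\quad\text{for all } j\in M.$$ In particular, a deterministic voting rule is weakly robust (i.e. weakly $\Delta(\mathcal{X})$-robust) if and only if it is a weighted majority rule with nonnegative weights.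
   Context: A deterministic voting rule is a map $\phi:\mathcal{X}\to\{-1,1\}$. $\Delta(\mathcal{X})$ is the set of probability distributions on $\mathcal{X}$. For $p\in\Delta(\mathcal{X})$, the responsiveness of individual $i$ is $r_i(\phi,p)=p(\{x:\phi(x)=x_i\})$. For $P\subseteq\Delta(\mathcal{X})$, $\phi$ is $P$-robust if for every $p\in P$ there is at least one $i\in N$ with $r_i(\phi,p)>1/2$; $\phi$ is weakly $P$-robust if for every $p\in P$ there is at least one $i\in N$ with $r_i(\phi,p)\geq 1/2$. A weighted majority rule (WMR) with nonzero weight vector $w\in\mathbb{R}^n$ is a rule with $\phi(x)=1$ whenever $\sum_iw_ix_i>0$ and $\phi(x)=-1$ whenever $\sum_iw_ix_i<0$ (ties $\sum_iw_ix_i=0$ resolved arbitrarily); it has no ties if $\sum_iw_ix_i\neq0$ for all $x\in\mathcal{X}$. *)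

(* Defs.v *)
From HB Require Import structures.
From mathcomp Require Import all_boot all_order all_algebra.
From mathcomp Require Import reals.
Set Implicit Arguments. Unset Strict Implicit. Unset Printing Implicit Defensive.
Import Order.TTheory GRing.Theory Num.Theory.
Local Open Scope ring_scope.

(* X = {-1,1}^n, encoded as boolean vectors: true <-> +1, false <-> -1. *)
Definition profile (n : nat) := {ffun 'I_n -> bool}.

Definition vote {R : realType} (b : bool) : R := if b then 1 else -1.

Definition rule (n : nat) := profile n -> bool.

Definition is_distr {R : realType} {n : nat} (p : profile n -> R) : Prop :=
  (forall x, 0 <= p x) /\ \sum_(x : profile n) p x = 1.

Definition resp {R : realType} {n : nat} (phi : rule n) (p : profile n -> R)
  (i : 'I_n) : R := \sum_(x : profile n | phi x == x i) p x.

Definition P_robust {R : realType} {n : nat} (P : (profile n -> R) -> Prop)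
  (phi : rule n) : Prop :=
  forall p, P p -> exists i : 'I_n, 1 / 2 < resp phi p i.

Definition weakly_P_robust {R : realType} {n : nat}
  (P : (profile n -> R) -> Prop) (phi : rule n) : Prop :=
  forall p, P p -> exists i : 'I_n, 1 / 2 <= resp phi p i.

Definition conv_hull {R : realType} {n m : nat} (ps : 'I_m -> profile n -> R)
  (q : profile n -> R) : Prop :=
  exists lam : 'I_m -> R,
    (forall j, 0 <= lam j) /\ \sum_(j < m) lam j = 1 /\
    (forall x, q x = \sum_(j < m) lam j * ps j x).

Definition wsum {R : realType} {n : nat} (w : 'I_n -> R) (x : profile n) : R :=
  \sum_(i < n) w i * vote (x i).

Definition is_WMR {R : realType} {n : nat} (w : 'I_n -> R) (phi : rule n) : Prop :=
  (exists i, w i != 0) /\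
  (forall x, (0 < wsum w x -> phi x = true) /\ (wsum w x < 0 -> phi x = false)).

Definition no_ties {R : realType} {n : nat} (w : 'I_n -> R) : Prop :=
  forall x : profile n, wsum w x != 0.

Definition nonneg_weights {R : realType} {n : nat} (w : 'I_n -> R) : Prop :=
  forall i, 0 <= w i.

Definition nonneg_nonzero {R : realType} {n : nat} (w : 'I_n -> R) : Prop :=
  nonneg_weights w /\ exists i, w i != 0.

Definition avg_resp {R : realType} {n : nat} (w : 'I_n -> R) (phi : rule n)
  (p : profile n -> R) : R :=
  (\sum_(i < n) w i * resp phi p i) / (\sum_(i < n) w i).

(* Main.v *)
Require Import Defs.
From HB Require Import structures.
From mathcomp Require Import all_boot all_order all_algebra.
From mathcomp Require Import reals.
From mathcomp Require Import ring lra.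
From Stdlib Require Import Classical.
Set Implicit Arguments. Unset Strict Implicit. Unset Printing Implicit Defensive.
Import Order.TTheory GRing.Theory Num.Theory.
Local Open Scope ring_scope.
Definition dualS (R : realFieldType) (I J : finType) (A : I -> J -> R)
  (aI : pred I) (S : pred J) : Prop :=
  exists lam : I -> R, (forall i, 0 <= lam i) /\ (exists i, aI i /\ 0 < lam i) /\
    forall j, S j -> \sum_(i | aI i) lam i * A i j <= 0.

Definition primalS (R : realFieldType) (I J : finType) (A : I -> J -> R)
  (aI : pred I) (S : pred J) : Prop :=
  exists w : J -> R, (forall j, 0 <= w j) /\
    forall i, aI i -> 0 < \sum_(j | S j) A i j * w j.

Lemma sep1 (R : realFieldType) (a0 : R) (U : seq R) :
  (forall b, b \in U -> a0 < b) -> exists t, a0 < t /\ forall b, b \in U -> t < b.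
Proof.
elim: U => [|b U IH] H.
  by exists (a0 + 1); split => //; lra.
have [t [h1 h2]] : exists t, a0 < t /\ forall c, c \in U -> t < c.
  by apply: IH => c hc; apply: H; rewrite in_cons hc orbT.
have hb := H b (mem_head b U).
exists (Num.min t ((a0 + b) / 2)); split.
  by rewrite lt_min h1 /=; lra.
move=> c; rewrite in_cons => /orP [/eqP -> | hc]; rewrite gt_min.
  by apply/orP; right; lra.
by rewrite h2.
Qed.

Lemma sep (R : realFieldType) (a0 : R) (L U : seq R) :
  (forall b, b \in U -> a0 < b) -> (forall a b, a \in L -> b \in U -> a < b) ->
  exists t, a0 < t /\ (forall a, a \in L -> a < t) /\ (forall b, b \in U -> t < b).
Proof.
elim: L => [|a L IH] H0 HLU.
  by have [t [h1 h2]] := sep1 H0; exists t.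
have [t [h1 [h2 h3]]] : exists t, a0 < t /\ (forall a, a \in L -> a < t) /\ (forall b, b \in U -> t < b).
  by apply: IH => // x b hx hb; apply: HLU => //; rewrite in_cons hx orbT.
case: (ltP a t) => hat.
  exists t; split => //; split => //.
  by move=> c; rewrite in_cons => /orP[/eqP->|]; [done| exact: h2].
have [t' [h1' h2']] := sep1 (fun b hb => HLU a b (mem_head a L) hb).
exists t'; split; first by lra.
split => // c; rewrite in_cons => /orP[/eqP->|hc] //.
have := h2 c hc; lra.
Qed.

Lemma sum_ind (R : realFieldType) (I : finType) (P : pred I) (F : I -> R) j :
  P j -> \sum_(i | P i) (j == i)%:R * F i = F j.
Proof.
move=> Pj; rewrite (bigD1 j) //= eqxx mul1r big1 ?addr0 // => i /andP[_ hij].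
by rewrite eq_sym (negbTE hij) mul0r.
Qed.

Lemma ville (R : realFieldType) (J : finType) (k : nat) :
  forall (I : finType) (aI : pred I) (S : pred J) (A : I -> J -> R),
  #|S| = k -> ~ dualS A aI S -> primalS A aI S.
Proof.
elim: k => [|k IH] I aI S A hk hnd.
  case: (pickP aI) => [i0 hi0 | hnone].
    exfalso; apply: hnd; exists (fun i => (i == i0)%:R); split.
      by move=> i; exact: ler0n.
    split; first by exists i0; split => //; rewrite eqxx ltr01.
    move=> j hj; have := card0_eq hk j; rewrite !inE.
    by rewrite unfold_in hj.
  by exists (fun _ => 0); split => // i hi; rewrite hnone in hi.
have : (0 < #|S|)%N by rewrite hk.
case/card_gt0P => j0 hj0.
have Sj0 : S j0 by move: hj0; rewrite unfold_in.
pose S' := fun j => (j != j0) && S j.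
have hk' : #|S'| = k.
  move: hk; rewrite (cardD1 j0) hj0 add1n => -[<-].
  by apply: eq_card => j; rewrite !inE unfold_in /S'.
pose d := fun i => A i j0.
pose aI' := fun x : (I + I * I)%type => match x with
  | inl i => aI i && (d i <= 0)
  | inr p => [&& aI p.1, aI p.2, 0 < d p.1 & d p.2 < 0] end.
pose A' := fun (x : (I + I * I)%type) (j : J) => match x with
  | inl i => A i j
  | inr p => d p.1 * A p.2 j - d p.2 * A p.1 j end.
have hnd' : ~ dualS A' aI' S'.
  move=> [lam' [hl0 [[x [hxa hxp]] hl]]]; apply: hnd.
  pose g := fun p i => lam' (inr p) * (d p.1 * (p.2 == i)%:R - d p.2 * (p.1 == i)%:R).
  pose lam := fun i => (if aI' (inl i) then lam' (inl i) else 0)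
     + \sum_(p | aI' (inr p)) g p i.
  have hg : forall p i, aI' (inr p) -> 0 <= g p i.
    move=> p i /and4P[_ _ h1 h2]; rewrite /g; apply: mulr_ge0 => //.
    have := ler0n R (p.2 == i); have := ler0n R (p.1 == i); nra.
  have hsg : forall i, 0 <= \sum_(p | aI' (inr p)) g p i.
    by move=> i; apply: sumr_ge0 => p hp; exact: hg.
  have hf : forall i, 0 <= (if aI' (inl i) then lam' (inl i) else 0).
    by move=> i; case: ifP.
  have key : forall c : I -> R, \sum_(i | aI i) lam i * c i =
      \sum_(x | aI' x) lam' x * (match x with inl i => c i
                                  | inr p => d p.1 * c p.2 - d p.2 * c p.1 end).
    move=> c; rewrite big_sumType /=.
    under eq_bigr do rewrite mulrDl.
    rewrite big_split /=; congr (_ + _).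
      rewrite big_mkcond [RHS]big_mkcond /=; apply: eq_bigr => i _.
      by case: (aI i); case: (d i <= 0); rewrite /= ?mul0r.
    under eq_bigr do rewrite mulr_suml.
    rewrite exchange_big /=; apply: eq_bigr => p /and4P[h1 h2 h3 h4].
    have -> : \sum_(i | aI i) g p i * c i =
        \sum_(i | aI i) ((p.2 == i)%:R * (lam' (inr p) * d p.1 * c i))
      - \sum_(i | aI i) ((p.1 == i)%:R * (lam' (inr p) * d p.2 * c i)).
      by rewrite -sumrB; apply: eq_bigr => i _; rewrite /g; ring.
    rewrite !sum_ind //; ring.
  exists lam; split.
    by move=> i; rewrite /lam; apply: addr_ge0.
  split.
    case: x hxa hxp => [i | p] hxa hxp.
      exists i; move: (hxa) => /andP[hai _]; split => //.
      by rewrite /lam hxa; have := hsg i; lra.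
    exists p.2; move: (hxa) => /and4P[h1 h2 h3 h4]; split => //.
    rewrite /lam (bigD1 p) //=.
    have hne : (p.1 == p.2) = false.
      by apply/negbTE/eqP => e; move: h3; rewrite e; lra.
    have e : g p p.2 = lam' (inr p) * d p.1.
      by rewrite /g eqxx hne /= mulr1 mulr0 subr0.
    rewrite e.
    set rest := (\sum_(_ | _) _).
    have : 0 <= rest by apply: sumr_ge0 => q /andP[hq _]; exact: hg.
    have := hf p.2; rewrite /aI' /=; have := mulr_gt0 hxp h3; lra.
  move=> j hj; rewrite (key (fun i => A i j)).
  case: (eqVneq j j0) => [->|hjj].
    apply: sumr_le0 => -[i|p] /=.
      by move=> /andP[_ hd]; apply: mulr_ge0_le0 => //.
    by move=> _; rewrite /d mulrC [A p.1 j0 * _]mulrC subrr mul0r.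
  by apply: hl; rewrite /S' hjj hj.
have [w' [hw'0 hw']] := IH _ aI' S' A' hk' hnd'.
pose s := fun i => \sum_(j | S' j) A i j * w' j.
have hs1 : forall i, aI i -> d i <= 0 -> 0 < s i.
  by move=> i h1 h2; apply: (hw' (inl i)); rewrite /aI' h1 h2.
have hs2 : forall i k0, aI i -> aI k0 -> 0 < d i -> d k0 < 0 -> 0 < d i * s k0 - d k0 * s i.
  move=> i k0 h1 h2 h3 h4; have := hw' (inr (i, k0)); rewrite /aI' /= h1 h2 h3 h4 => /(_ isT).
  congr (_ < _); rewrite /s !mulr_sumr -sumrB; apply: eq_bigr => j _; rewrite /A' /=; ring.
pose L := [seq - s i / d i | i <- enum [pred i | aI i && (0 < d i)]].
pose U := [seq s k0 / - d k0 | k0 <- enum [pred k0 | aI k0 && (d k0 < 0)]].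
have [t [ht0 [htL htU]]] : exists t, 0 < t /\ (forall a, a \in L -> a < t) /\ (forall b, b \in U -> t < b).
  apply: sep.
    move=> b /mapP [k0]; rewrite mem_enum inE => /andP[hk1 hk2] ->.
    by apply: divr_gt0; [apply: hs1 => //; exact: ltW | rewrite oppr_gt0].
  move=> a b /mapP [i]; rewrite mem_enum inE => /andP[hi1 hi2] ->.
  move=> /mapP [k0]; rewrite mem_enum inE => /andP[hk1 hk2] ->.
  rewrite -subr_gt0.
  have -> : s k0 / - d k0 - - s i / d i = (d i * s k0 - d k0 * s i) / (d i * - d k0).
    by field; rewrite ltr0_neq0 // lt0r_neq0.
  apply: divr_gt0; first exact: hs2.
  by apply: mulr_gt0 => //; rewrite oppr_gt0.
exists (fun j => if j == j0 then t else w' j); split.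
  by move=> j; case: eqP => _; [exact: ltW | exact: hw'0].
move=> i hi; rewrite (bigD1 j0) //= eqxx.
have -> : \sum_(j | S j && (j != j0)) A i j * (if j == j0 then t else w' j) = s i.
  rewrite /s; apply: eq_big => [j|j /andP[_ /negbTE ->]] //.
  by rewrite /S' andbC.
have -> : A i j0 = d i by [].
case: (ltrgtP (d i) 0) => hd.
- have h1 := hs1 i hi (ltW hd).
  have := htU (s i / - d i) (map_f _ _); rewrite mem_enum inE hi hd => /(_ isT).
  rewrite ltr_pdivlMr ?oppr_gt0 //; nra.
- have := htL (- s i / d i) (map_f _ _); rewrite mem_enum inE hi hd => /(_ isT).
  rewrite ltr_pdivrMr //; nra.
- by rewrite hd mul0r add0r; apply: hs1 => //; rewrite hd.
Qed.
Definition convh (R : realType) (n : nat) (M : finType) (ps : M -> profile n -> R)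
  (q : profile n -> R) : Prop :=
  exists lam : M -> R,
    (forall j, 0 <= lam j) /\ \sum_j lam j = 1 /\
    (forall x, q x = \sum_j lam j * ps j x).

Lemma resp_conv (R : realType) n (M : finType) (phi : rule n) (ps : M -> profile n -> R)
  (lam : M -> R) (q : profile n -> R) i :
  (forall x, q x = \sum_j lam j * ps j x) ->
  resp phi q i = \sum_j lam j * resp phi (ps j) i.
Proof.
move=> hq; rewrite /resp (eq_bigr _ (fun x _ => hq x)) exchange_big /=.
by apply: eq_bigr => j _; rewrite mulr_sumr.
Qed.

Lemma sum_gt0 (R : realType) (I : finType) (F : I -> R) :
  (forall i, 0 <= F i) -> (exists i, 0 < F i) -> 0 < \sum_i F i.
Proof.
move=> h [i hi]; rewrite (bigD1 i) //=; apply: (lt_le_trans hi).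
by rewrite lerDl; apply: sumr_ge0 => j _; exact: h.
Qed.

Lemma exists_pos (R : realType) (M : finType) (lam : M -> R) :
  (forall j, 0 <= lam j) -> \sum_j lam j = 1 -> exists j, 0 < lam j.
Proof.
move=> h0 h1; case: (pickP (fun j => 0 < lam j)) => [j hj|hn]; first by exists j.
exfalso; have : \sum_j lam j = 0.
  by apply: big1 => j _; apply/eqP; rewrite eq_le h0 andbT leNgt hn.
by rewrite h1 => /eqP; rewrite oner_eq0.
Qed.

Lemma pos_of_sum (R : realType) (M : finType) (mu c : M -> R) :
  (forall j, 0 <= mu j) -> 0 < \sum_j c j * mu j -> 0 < \sum_j mu j.
Proof.
move=> h0 h1; case: (pickP (fun j => 0 < mu j)) => [j hj|hn].
  by apply: sum_gt0 => //; exists j.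
exfalso; move: h1; rewrite big1 ?ltxx // => j _.
suff -> : mu j = 0 by rewrite mulr0.
by apply/eqP; rewrite eq_le h0 andbT leNgt hn.
Qed.

Lemma wpos (R : realType) n (w : 'I_n -> R) : nonneg_nonzero w -> 0 < \sum_i w i.
Proof.
move=> [h0 [i hi]]; apply: sum_gt0 => //; exists i.
by rewrite lt_def hi h0.
Qed.

Lemma sum_shift (R : realType) (I : finType) (w r : I -> R) :
  \sum_i w i * (r i - 1/2) = \sum_i w i * r i - 1/2 * \sum_i w i.
Proof. by rewrite mulr_sumr -sumrB; apply: eq_bigr => i _; ring. Qed.

Lemma avg_gt (R : realType) n (w : 'I_n -> R) phi p : nonneg_nonzero w ->
  (1/2 < avg_resp w phi p) = (0 < \sum_i w i * (resp phi p i - 1/2)).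
Proof.
move=> hw; have hW := wpos hw.
rewrite /avg_resp ltr_pdivlMr // sum_shift subr_gt0 mulrC.
by [].
Qed.

Lemma avg_ge (R : realType) n (w : 'I_n -> R) phi p : nonneg_nonzero w ->
  (1/2 <= avg_resp w phi p) = (0 <= \sum_i w i * (resp phi p i - 1/2)).
Proof.
move=> hw; have hW := wpos hw.
rewrite /avg_resp ler_pdivlMr // sum_shift subr_ge0 mulrC.
by [].
Qed.

Lemma conv_ident (R : realType) n (M : finType) (phi : rule n) (ps : M -> profile n -> R)
  (lam : M -> R) (q : profile n -> R) (w : 'I_n -> R) :
  \sum_j lam j = 1 -> (forall x, q x = \sum_j lam j * ps j x) ->
  \sum_i w i * (resp phi q i - 1/2) =
  \sum_j lam j * \sum_i w i * (resp phi (ps j) i - 1/2).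
Proof.
move=> hl1 hq.
have e : forall i, resp phi q i - 1/2 = \sum_j lam j * (resp phi (ps j) i - 1/2).
  by move=> i; rewrite (resp_conv _ _ hq) sum_shift hl1 mulr1.
under eq_bigr do rewrite e mulr_sumr.
rewrite exchange_big; apply: eq_bigr => j _; rewrite mulr_sumr.
by apply: eq_bigr => i _; ring.
Qed.

Lemma part1s (R : realType) n (hn : (0 < n)%N) (M : finType)
  (ps : M -> profile n -> R) (phi : rule n) :
  P_robust (convh ps) phi <->
  exists w : 'I_n -> R, nonneg_nonzero w /\ forall j, 1/2 < avg_resp w phi (ps j).
Proof.
split.
- move=> hrob.
  pose A := fun (j : M) (i : 'I_n) => resp phi (ps j) i - 1/2.
  have hnd : ~ dualS A xpredT xpredT.
    move=> [lam [hl0 [[j0 [_ hj0]] hl]]].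
    have hLm : 0 < \sum_j lam j by apply: sum_gt0 => //; exists j0.
    pose mu := fun j => lam j / \sum_j lam j.
    have hq : convh ps (fun x => \sum_j mu j * ps j x).
      exists mu; split; first by move=> j; apply: divr_ge0 => //; exact: ltW.
      split => //.
      by rewrite /mu -mulr_suml divff // lt0r_neq0.
    have [i hi] := hrob _ hq.
    rewrite (@resp_conv _ _ _ phi ps mu) // in hi.
    have := hl i isT; rewrite /A sum_shift.
    have e : \sum_j mu j * resp phi (ps j) i =
              (\sum_j lam j * resp phi (ps j) i) / \sum_j lam j.
      by rewrite mulr_suml; apply: eq_bigr => j _; rewrite /mu mulrAC.
    rewrite e in hi.
    move: hi; rewrite ltr_pdivlMr //; lra.
  have [w [hw0 hw]] := ville (erefl _) hnd.
  case: (pickP (fun i => w i != 0)) => [i0 hi0 | hz].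
    have hnn : nonneg_nonzero w by split => //; exists i0.
    exists w; split => // j; rewrite avg_gt //.
    have := hw j isT; rewrite /A.
    by under eq_bigr do rewrite mulrC.
  exists (fun _ => 1); split.
    by split => [i|]; [exact: ler01 | exists (Ordinal hn); rewrite oner_neq0].
  move=> j; exfalso; have := hw j isT; rewrite big1 ?ltxx // => i _.
  by move: (hz i) => /= /negbFE /eqP ->; rewrite mulr0.
- move=> [w [hw hwj]] q [lam [hl0 [hl1 hq]]].
  case: (boolP [exists i, 1/2 < resp phi q i]) => [/existsP // | hne].
  exfalso.
  have hle : forall i, resp phi q i <= 1/2.
    move=> i; rewrite leNgt; apply/negP => h; move/negP: hne; apply.
    by apply/existsP; exists i.
  have h1 : \sum_i w i * (resp phi q i - 1/2) <= 0.
    apply: sumr_le0 => i _; apply: mulr_ge0_le0; first exact: hw.1.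
    by have := hle i; lra.
  have h2 : 0 < \sum_i w i * (resp phi q i - 1/2).
    rewrite (conv_ident _ _ hl1 hq); apply: sum_gt0.
      move=> j; apply: mulr_ge0 (hl0 j) _.
      by have := hwj j; rewrite avg_gt // => /ltW.
    have [j hj] := exists_pos hl0 hl1; exists j; apply: mulr_gt0 hj _.
    by rewrite -avg_gt.
  lra.
Qed.

Lemma part1w (R : realType) n (hn : (0 < n)%N) (M : finType)
  (ps : M -> profile n -> R) (phi : rule n) :
  weakly_P_robust (convh ps) phi <->
  exists w : 'I_n -> R, nonneg_nonzero w /\ forall j, 1/2 <= avg_resp w phi (ps j).
Proof.
split.
- move=> hrob; apply: NNPP => hno.
  pose B := fun (i : 'I_n) (j : M) => 1/2 - resp phi (ps j) i.
  have hnd : ~ dualS B xpredT xpredT.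
    move=> [w [hw0 [[i0 [_ hi0]] hw]]]; apply: hno; exists w.
    have hnn : nonneg_nonzero w by split => //; exists i0; rewrite lt0r_neq0.
    split => // j; rewrite avg_ge //.
    have := hw j isT; rewrite /B.
    have -> : \sum_i w i * (resp phi (ps j) i - 1/2) =
              - \sum_i w i * (1/2 - resp phi (ps j) i).
      by rewrite -sumrN; apply: eq_bigr => i _; ring.
    by rewrite oppr_ge0.
  have [mu [hm0 hm]] := ville (erefl _) hnd.
  have hi0 := hm (Ordinal hn) isT.
  have hM : 0 < \sum_j mu j := pos_of_sum hm0 hi0.
  pose nu := fun j => mu j / \sum_j mu j.
  have hq : convh ps (fun x => \sum_j nu j * ps j x).
    exists nu; split; first by move=> j; apply: divr_ge0 => //; exact: ltW.
    split => //.
    by rewrite /nu -mulr_suml divff // lt0r_neq0.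
  have [i hi] := hrob _ hq.
  rewrite (@resp_conv _ _ _ phi ps nu) // in hi.
  have := hm i isT; rewrite /B.
  have -> : \sum_j (1/2 - resp phi (ps j) i) * mu j =
            1/2 * \sum_j mu j - \sum_j mu j * resp phi (ps j) i.
    by rewrite mulr_sumr -sumrB; apply: eq_bigr => j _; ring.
  have e : \sum_j nu j * resp phi (ps j) i =
            (\sum_j mu j * resp phi (ps j) i) / \sum_j mu j.
    by rewrite mulr_suml; apply: eq_bigr => j _; rewrite /nu mulrAC.
  rewrite e in hi.
  move: hi; rewrite ler_pdivlMr //; lra.
- move=> [w [hw hwj]] q [lam [hl0 [hl1 hq]]].
  case: (boolP [exists i, 1/2 <= resp phi q i]) => [/existsP // | hne].
  exfalso.
  have hlt : forall i, resp phi q i < 1/2.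
    move=> i; rewrite ltNge; apply/negP => h; move/negP: hne; apply.
    by apply/existsP; exists i.
  have h1 : 0 < \sum_i w i * (1/2 - resp phi q i).
    apply: sum_gt0.
      by move=> i; apply: mulr_ge0; [exact: hw.1 | have := hlt i; lra].
    have [i0 hi0] := hw.2; exists i0; apply: mulr_gt0.
      by rewrite lt_def hi0 hw.1.
    by have := hlt i0; lra.
  have h2 : 0 <= \sum_i w i * (resp phi q i - 1/2).
    rewrite (conv_ident _ _ hl1 hq); apply: sumr_ge0 => j _.
    by apply: mulr_ge0 (hl0 j) _; rewrite -avg_ge.
  have : \sum_i w i * (resp phi q i - 1/2) = - \sum_i w i * (1/2 - resp phi q i).
    by rewrite -sumrN; apply: eq_bigr => i _; ring.
  lra.
Qed.
Definition dirac (R : realType) n (x : profile n) : profile n -> R :=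
  fun y => (x == y)%:R.

Lemma sum_ind' (R : realType) (T : finType) (F : T -> R) y :
  \sum_x F x * (x == y)%:R = F y.
Proof.
rewrite (bigD1 y) //= eqxx mulr1 big1 ?addr0 // => x hx.
by rewrite (negbTE hx) mulr0.
Qed.

Lemma distr_convh (R : realType) n (q : profile n -> R) :
  is_distr q <-> convh (@dirac R n) q.
Proof.
split.
  move=> [h0 h1]; exists q; split => //; split => // y.
  by rewrite /dirac sum_ind'.
move=> [lam [h0 [h1 hq]]].
have e : forall y, q y = lam y by move=> y; rewrite hq /dirac sum_ind'.
split; first by move=> x; rewrite e.
by under eq_bigr do rewrite e.
Qed.

Lemma resp_dirac (R : realType) n (phi : rule n) x i :
  resp phi (@dirac R n x) i = (phi x == x i)%:R.
Proof.
rewrite /resp /dirac; case h: (phi x == x i).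
  rewrite (bigD1 x) //= eqxx big1 ?addr0 // => y /andP[_ hy].
  by rewrite eq_sym (negbTE hy).
rewrite big1 // => y hy; case: eqP => [exy|] //.
by move: h; rewrite exy hy.
Qed.

Lemma vote_mul (R : realType) (b c : bool) :
  vote b * vote c = 2 * (b == c)%:R - 1 :> R.
Proof. by case: b; case: c; rewrite /vote /=; lra. Qed.

Lemma dirac_ident (R : realType) n (w : 'I_n -> R) (phi : rule n) x :
  \sum_i w i * (resp phi (@dirac R n x) i - 1/2) = (vote (phi x) * wsum w x) / 2.
Proof.
have key : vote (phi x) * wsum w x =
    2 * \sum_i w i * (phi x == x i)%:R - \sum_i w i.
  rewrite /wsum mulr_sumr mulr_sumr -sumrB; apply: eq_bigr => i _.
  by rewrite mulrCA vote_mul; ring.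
rewrite sum_shift key; under eq_bigr do rewrite resp_dirac.
by field.
Qed.

Lemma part3 (R : realType) n (hn : (0 < n)%N) (phi : rule n) :
  P_robust (@is_distr R n) phi <->
  exists w : 'I_n -> R, nonneg_weights w /\ is_WMR w phi /\ no_ties w.
Proof.
split.
- move=> hrob.
  have : P_robust (convh (@dirac R n)) phi by move=> q /distr_convh hq; exact: hrob.
  move/(part1s hn) => [w [hw hwj]].
  have hx : forall x, 0 < vote (phi x) * wsum w x.
    by move=> x; have := hwj x; rewrite avg_gt // dirac_ident; lra.
  exists w; split; first exact: hw.1.
  split; last by move=> x; apply/eqP => e; have := hx x; rewrite e mulr0 ltxx.
  split; first exact: hw.2.
  move=> x; split => h; move: (hx x); case: (phi x) => //; rewrite /vote => h';
    exfalso; lra.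
- move=> [w [hw0 [[hwn hwmr] hnt]]].
  have hnn : nonneg_nonzero w by split.
  have : P_robust (convh (@dirac R n)) phi.
    apply/(part1s hn); exists w; split => // x; rewrite avg_gt // dirac_ident.
    move: (hnt x); have [h1 h2] := hwmr x.
    case: (ltrgtP (wsum w x) 0) => h hnt'.
    + by rewrite (h2 h) /vote; lra.
    + by rewrite (h1 h) /vote; lra.
    + by move: hnt'; rewrite ?h ?eqxx.
  by move=> hr q /distr_convh hq; exact: hr.
Qed.

Lemma part4 (R : realType) n (hn : (0 < n)%N) (phi : rule n) :
  weakly_P_robust (@is_distr R n) phi <->
  exists w : 'I_n -> R, nonneg_weights w /\ is_WMR w phi.
Proof.
split.
- move=> hrob.
  have : weakly_P_robust (convh (@dirac R n)) phi
    by move=> q /distr_convh hq; exact: hrob.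
  move/(part1w hn) => [w [hw hwj]].
  have hx : forall x, 0 <= vote (phi x) * wsum w x.
    by move=> x; have := hwj x; rewrite avg_ge // dirac_ident; lra.
  exists w; split; first exact: hw.1.
  split; first exact: hw.2.
  move=> x; split => h; move: (hx x); case: (phi x) => //; rewrite /vote => h';
    exfalso; lra.
- move=> [w [hw0 [hwn hwmr]]].
  have hnn : nonneg_nonzero w by split.
  have : weakly_P_robust (convh (@dirac R n)) phi.
    apply/(part1w hn); exists w; split => // x; rewrite avg_ge // dirac_ident.
    have [h1 h2] := hwmr x.
    case: (ltrgtP (wsum w x) 0) => h.
    + by rewrite (h2 h) /vote; lra.
    + by rewrite (h1 h) /vote; lra.
    + by rewrite h mulr0; lra.
  by move=> hr q /distr_convh hq; exact: hr.
Qed.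

Theorem proposition1 (R : realType) (n : nat) (hn : (0 < n)%N) :
  (forall (m : nat) (ps : 'I_m -> profile n -> R),
     (forall j, is_distr (ps j)) ->
     (exists q : profile n -> R, is_distr q /\ forall j, q <> ps j) ->
     forall phi : rule n,
       (P_robust (conv_hull ps) phi <->
          exists w : 'I_n -> R, nonneg_nonzero w /\
            forall j, 1 / 2 < avg_resp w phi (ps j)) /\
       (weakly_P_robust (conv_hull ps) phi <->
          exists w : 'I_n -> R, nonneg_nonzero w /\
            forall j, 1 / 2 <= avg_resp w phi (ps j))) /\
  (forall phi : rule n,
     P_robust (@is_distr R n) phi <->
       exists w : 'I_n -> R, nonneg_weights w /\ is_WMR w phi /\ no_ties w) /\
  (forall phi : rule n,
     weakly_P_robust (@is_distr R n) phi <->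
       exists w : 'I_n -> R, nonneg_weights w /\ is_WMR w phi).
Proof.
split.
  move=> m ps _ _ phi; split; [exact: (part1s hn) | exact: (part1w hn)].
split; [exact: part3 | exact: part4].
Qed.
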